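(* Let $g$, $r_c$ and the global frame $\vec E$ be as in the context. Let $(s,\vec r)$ be a molecule with $N$ atoms and pairwise distinct positions. If there exist $\vec t\in\mathbb{R}^{1\times3}$ and $o\in\mathrm{O}(3)$ with $o\neq I$ such that $$\{(s_i,\vec r_i-\vec t): i=1,\dots,N\}=\{(s_i,(\vec r_i-\vec t)o^T): i=1,\dots,N\},$$ then $\mathrm{rank}(\vec E(s,\vec r))<3$.
   Context: $s\in\mathbb{R}^{N\times d}$ and $\vec r\in\mathbb{R}^{N\times3}$ have rows $s_i$ and $\vec r_i\in\mathbb{R}^{1\times 3}$. $\mathrm{O}(3)=\{Q\in\mathbb{R}^{3\times3}:QQ^T=I\}$. A local environment is a finite set of pairs $(s',x)$ with $s'\in\mathbb{R}^d$, $x\in\mathbb{R}^{1\times 3}$. $g$ is a function from local environments to $\mathbb{R}^{F\times 3}$ with $g(\{(s',xo^T):(s',x)\in A\})=g(A)o^T$ for all $o\in\mathrm{O}(3)$ and all $A$. With cutoff $r_c>0$, the local frames are $\vec E_i(s,\vec r)=g(\{(s_j,\vec r_i-\vec r_j): \|\vec r_i-\vec r_j\|<r_c\})$ and the global frame is $\vec E(s,\vec r)=\sum_{i=1}^N\vec E_i(s,\vec r)$. *)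

(* Defs.v *)
From HB Require Import structures.
From mathcomp Require Import all_boot all_order all_algebra finmap.
From mathcomp Require Import reals.
Set Implicit Arguments. Unset Strict Implicit. Unset Printing Implicit Defensive.
Import Order.TTheory GRing.Theory Num.Theory.
Local Open Scope ring_scope.
Local Open Scope fset_scope.

Definition enorm {R : realType} (v : 'rV[R]_3) : R :=
  Num.sqrt (\sum_(k < 3) v 0 k ^+ 2).

Definition orthogonal3 {R : realType} (Q : 'M[R]_3) : Prop := Q *m Q^T = 1%:M.

Definition local_env (R : realType) (d : nat) := {fset ('rV[R]_d * 'rV[R]_3)}.

Definition env_act {R : realType} {d : nat} (o : 'M[R]_3) (A : local_env R d)
  : local_env R d := [fset (p.1, p.2 *m o^T) | p in A].

Definition equivariant {R : realType} {d F : nat}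
  (g : local_env R d -> 'M[R]_(F, 3)) : Prop :=
  forall (o : 'M[R]_3) (A : local_env R d), orthogonal3 o ->
    g (env_act o A) = g A *m o^T.

Definition local_frame {R : realType} {d F N : nat}
  (g : local_env R d -> 'M[R]_(F, 3)) (rc : R)
  (s : 'M[R]_(N, d)) (r : 'M[R]_(N, 3)) (i : 'I_N) : 'M[R]_(F, 3) :=
  g [fset (row j s, row i r - row j r) | j in 'I_N & enorm (row i r - row j r) < rc].

Definition global_frame {R : realType} {d F N : nat}
  (g : local_env R d -> 'M[R]_(F, 3)) (rc : R)
  (s : 'M[R]_(N, d)) (r : 'M[R]_(N, 3)) : 'M[R]_(F, 3) :=
  \sum_(i < N) local_frame g rc s r i.

(* Main.v *)
Require Import Defs.
From HB Require Import structures.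
From mathcomp Require Import all_boot all_order all_algebra finmap.
From mathcomp Require Import reals.
Import Order.TTheory GRing.Theory Num.Theory.
Local Open Scope ring_scope.
Local Open Scope fset_scope.

Lemma sumsq_mx (R : realType) (w : 'rV[R]_3) :
  \sum_(k < 3) w 0 k ^+ 2 = (w *m w^T) 0 0.
Proof. rewrite !mxE; apply: eq_bigr => k _; by rewrite !mxE expr2. Qed.

Lemma enorm_orth (R : realType) (o : 'M[R]_3) (v : 'rV[R]_3) :
  orthogonal3 o -> enorm (v *m o^T) = enorm v.
Proof.
move=> ho; rewrite /enorm !sumsq_mx trmx_mul trmxK -mulmxA (mulmxA o^T).
by rewrite (mulmx1C ho) mul1mx.
Qed.

Theorem proposition10 (R : realType) (d F N : nat)
  (g : local_env R d -> 'M[R]_(F, 3)) (rc : R)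
  (s : 'M[R]_(N, d)) (r : 'M[R]_(N, 3)) :
  equivariant g -> 0 < rc ->
  injective (fun i : 'I_N => row i r) ->
  (exists (t : 'rV[R]_3) (o : 'M[R]_3),
      orthogonal3 o /\ o != 1%:M /\
      [fset (row i s, row i r - t) | i in 'I_N] =
      [fset (row i s, (row i r - t) *m o^T) | i in 'I_N]) ->
  (\rank (global_frame g rc s r) < 3)%N.
Proof.
move=> heq _ rinj [t [o [ho [ho1 hS]]]].
have hex : forall i : 'I_N, exists j : 'I_N,
    row j s = row i s /\ row j r - t = (row i r - t) *m o^T.
  move=> i.
  have : (row i s, (row i r - t) *m o^T) \in
     [fset (row i s, (row i r - t) *m o^T) | i in 'I_N].
    by apply: (in_imfset _ (fun i : 'I_N => (row i s, (row i r - t) *m o^T))).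
  rewrite -hS => /imfsetP [j _ [e1 e2]]; by exists j.
have [sg hsg] := fin_all_exists hex.
have hoo : o^T *m o = 1%:M := mulmx1C ho.
have hdiff : forall i j, row (sg i) r - row (sg j) r = (row i r - row j r) *m o^T.
  move=> i j; have [_ ei] := hsg i; have [_ ej] := hsg j.
  have -> : row (sg i) r - row (sg j) r = (row (sg i) r - t) - (row (sg j) r - t).
    by rewrite opprB addrA subrK.
  by rewrite ei ej -mulmxBl opprB addrA subrK.
have sginj : injective sg.
  move=> i j e; apply: rinj => /=.
  have := hdiff i j; rewrite e subrr => /esym /(congr1 (mulmx^~ o)).
  rewrite mul0mx -mulmxA hoo mulmx1 => /eqP; rewrite subr_eq0 => /eqP //.
have loc : forall i, local_frame g rc s r (sg i) = local_frame g rc s r i *m o^T.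
  move=> i; rewrite /local_frame -(heq _ _ ho); congr g.
  apply/fsetP => x; apply/imfsetP/imfsetP.
  - move=> [j /= hj ->].
    have [j' ej'] : exists j', j = sg j'.
      have : j \in codom sg.
        by rewrite (inj_card_onto sginj) //.
      by move/codomP.
    subst j.
    exists (row j' s, row i r - row j' r).
      apply: (in_imfset _ (fun j => (row j s, row i r - row j r))).
      by move: hj; rewrite !inE /= hdiff enorm_orth.
    by rewrite /= (proj1 (hsg j')) hdiff.
  - move=> [p /imfsetP [j /= hj ->] ->].
    exists (sg j); last by rewrite /= (proj1 (hsg j)) hdiff.
    by move: hj; rewrite !inE /= hdiff enorm_orth.
set E := global_frame g rc s r.
have hE : E = E *m o^T.
  rewrite /E /global_frame mulmx_suml (reindex_inj sginj) /=.
  by apply: eq_bigr => i _; rewrite loc.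
have h0 : E *m (1%:M - o^T) = 0 by rewrite mulmxBr mulmx1 -hE subrr.
have := mulmx0_rank_max h0.
have : \rank (1%:M - o^T : 'M[R]_3) != 0%N.
  rewrite mxrank_eq0 subr_eq0; apply: contra ho1 => /eqP e.
  by rewrite -(trmxK o) -e trmx1.
case: (\rank (1%:M - o^T)) => // k _ h.
by rewrite addnS ltnS in h; apply: leq_ltn_trans (leq_addr _ _) _; rewrite ltnS; apply: leq_trans h.
Qed.
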